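(* Let $X$ be a locally compact space and $f\colon X\to\mathbb{C}$. The following are equivalent: (i) $f\in C_c(X)$; (ii) $f^{-1}(\mathbb{C}^* )$ is relatively quasi-compact, and for every filter $\mathcal{F}$ on $X$ such that the image filter $i(\mathcal{F})$ converges in $\mathcal{H}X$ to some $S\in\mathcal{H}X$ (where $i\colon X\to\mathcal{H}X$, $x\mapsto\{x\}$), one has $\lim_{\mathcal{F}}f=\sum_{s\in S}f(s)$.
   Context: Quasi-compact: every open cover has a finite subcover; relatively quasi-compact: contained in a quasi-compact set; locally compact: every point has a quasi-compact Hausdorff neighbourhood (the space need not be Hausdorff). $C_c(X)$ is the linear span of the functions $g\colon X\to\mathbb{C}$ for which there is an open Hausdorff $V\subset X$ with $g|_V\in C_c(V)$ and $g=0$ outside $V$. $\mathcal{H}X$ is the set of nonempty $S\subset X$ such that every finite family of open sets each meeting $S$ has nonempty intersection, with the topology generated by $\{S:S\cap V\neq\emptyset\}$ ($V$ open) and $\{S:S\cap Q=\emptyset\}$ ($Q$ quasi-compact). *)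

(* Defs.v *)
From HB Require Import structures.
From mathcomp Require Import all_boot all_order all_algebra.
From mathcomp Require Import all_classical all_reals all_analysis.
From mathcomp Require Export complex.
Import numFieldNormedType.Exports.
Set Implicit Arguments. Unset Strict Implicit. Unset Printing Implicit Defensive.
Local Open Scope ring_scope.
Local Open Scope classical_set_scope.

(* The complex numbers, as the algebraically closed numeric field R[i]
   (R a real field), with the topology of its modulus. *)
Definition Cx (R : realType) : numClosedFieldType := R[i].

Section defs.
Context {X : topologicalType}.

Definition hausdorff_subset (A : set X) : Prop :=
  forall x y, A x -> A y -> x <> y ->
    exists U W : set X, [/\ open U, open W, U x, W y & U `&` W `&` A = set0].

(* locally compact: every point has a quasi-compact Hausdorff neighbourhood
   ("compact" in mathcomp-analysis is quasi-compactness, no separation). *)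
Definition locally_compact_space : Prop :=
  forall x : X, exists K : set X, [/\ nbhs x K, compact K & hausdorff_subset K].

Definition rel_quasi_compact (A : set X) : Prop :=
  exists Q : set X, compact Q /\ A `<=` Q.

(* Generators of C_c(X): g vanishes outside an open Hausdorff V, and its
   restriction to V is in C_c(V): continuous on V, with support (closure in V
   of {g <> 0}) quasi-compact. *)
Definition Cc_generator {R : realType} (g : X -> Cx R) : Prop :=
  exists V : set X, [/\ open V, hausdorff_subset V,
    {within V, continuous g},
    compact (closure [set x | g x != 0] `&` V) &
    forall x, ~ V x -> g x = 0].

Definition Cc {R : realType} (f : X -> Cx R) : Prop :=
  exists (n : nat) (c : nat -> Cx R) (g : nat -> X -> Cx R),
    (forall k, (k < n)%N -> Cc_generator (g k)) /\
    f = fun x => \sum_(k < n) c k * g k x.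

Definition HX (S : set X) : Prop :=
  S !=set0 /\
  forall (n : nat) (U : nat -> set X),
    (forall k, (k < n)%N -> open (U k) /\ S `&` U k !=set0) ->
    \bigcap_(k in [set k | (k < n)%N]) U k !=set0.

(* Subbasic open sets of HX (as sets of subsets of X; intersected with HX). *)
Definition HX_subbasic (B : set (set X)) : Prop :=
  (exists V : set X, open V /\ B = [set S | S `&` V !=set0]) \/
  (exists Q : set X, compact Q /\ B = [set S | S `&` Q = set0]).

Definition HX_open (U : set (set X)) : Prop :=
  U `<=` HX /\
  forall S, U S -> exists (n : nat) (B : nat -> set (set X)),
    [/\ forall k, (k < n)%N -> HX_subbasic (B k),
        forall k, (k < n)%N -> B k S &
        forall T, HX T -> (forall k, (k < n)%N -> B k T) -> U T].

(* The image filter i(F), i : x |-> {x}, converges to S in HX. *)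
Definition HX_image_converges (F : set_system X) (S : set X) : Prop :=
  forall U, HX_open U -> U S -> F [set x | U [set x]].

End defs.

(* Main.v *)
Require Import Defs.
From HB Require Import structures.
From mathcomp Require Import all_boot all_order all_algebra.
From mathcomp Require Import all_classical all_reals all_analysis.
From mathcomp Require Import complex.
Import numFieldNormedType.Exports.
Local Open Scope ring_scope.
Local Open Scope classical_set_scope.
From mathcomp Require finmap.

Module ProofHelpers.
Import finmap.
Import Order.TTheory GRing.Theory Num.Theory.
Set Implicit Arguments. Unset Strict Implicit. Unset Printing Implicit Defensive.
Local Open Scope ring_scope.
Local Open Scope classical_set_scope.

Definition PX (X : topologicalType) (x0 : X) : Type := X.
HB.instance Definition _ (X : topologicalType) (x0 : X) := Topological.on (PX x0).
HB.instance Definition _ (X : topologicalType) (x0 : X) := isPointed.Build (PX x0) x0.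

Section A.
Context {X : topologicalType}.

Lemma compact_fin_cover (A : set X) (I : choiceType) (D : set I) (f : I -> set X) :
  compact A -> (forall i, D i -> open (f i)) -> A `<=` \bigcup_(i in D) f i ->
  exists D' : {fset I}, {subset D' <= D} /\ A `<=` \bigcup_(i in [set` D']) f i.
Proof.
move=> cA oF Acov.
have [[x0 _]|A0] := pselect (A !=set0); last first.
  exists fset0; split; first by move=> i; rewrite inE.
  by move=> z Az; exfalso; apply: A0; exists z.
have := @compact_cover (PX x0); move=> E.
have cA' : cover_compact (A : set (PX x0)) by rewrite -E.
by have [D' sD sA] := cA' I D f oF Acov; exists D'.
Qed.

Lemma open_fbigcap (I : choiceType) (D : {fset I}) (f : I -> set X) :
  (forall i, i \in D -> open (f i)) -> open (\bigcap_(i in [set` D]) f i).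
Proof.
move=> oF; have -> : \bigcap_(i in [set` D]) f i = \big[setI/setT]_(i <- D) f i.
  by rewrite -bigcap_fset.
rewrite big_seq; apply: (big_ind (@open X)) => //; first exact: openT.
exact: openI.
Qed.

Lemma hs_sub (A B : set X) : hausdorff_subset A -> B `<=` A -> hausdorff_subset B.
Proof.
move=> hA BA x y Bx By xy; have [U [W [oU oW Ux Wy UWA]]] := hA x y (BA _ Bx) (BA _ By) xy.
exists U, W; split => //; apply/seteqP; split => // z [[Uz Wz] Bz].
suff : (U `&` W `&` A) z by rewrite UWA.
exact: (conj (conj Uz Wz) (BA _ Bz)).
Qed.

Lemma HX_sub1 (S V : set X) s t : HX S -> open V -> hausdorff_subset V ->
  S s -> S t -> V s -> V t -> s = t.
Proof.
move=> [_ HS] oV hV Ss St Vs Vt; apply: contrapT => st.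
have [U [W [oU oW Us Wt UWV]]] := hV s t Vs Vt st.
pose G := fun k : nat => if k == 0%N then U `&` V else W `&` V.
have [|z Gz] := HS 2%N G.
  move=> k k2; rewrite /G; case: ifP => _; split.
  - exact: openI.
  - by exists s.
  - exact: openI.
  - by exists t.
have := Gz 0%N (isT : (0 < 2)%N); have := Gz 1%N (isT : (1 < 2)%N).
rewrite /G /= => -[Wz Vz] [Uz _].
by have : (U `&` W `&` V) z by []; rewrite UWV.
Qed.

Lemma sep_pt_compact (K Cm : set X) x : hausdorff_subset K -> compact Cm ->
  Cm `<=` K -> K x -> ~ Cm x ->
  exists O W : set X, [/\ open O, open W, O x, Cm `<=` W & O `&` W `&` K = set0].
Proof.
move=> hK cC CK Kx nCx.
have : forall y, exists UW : set X * set X, Cm y ->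
    [/\ open UW.1, open UW.2, UW.1 x, UW.2 y & UW.1 `&` UW.2 `&` K = set0].
  move=> y; have [Cy|nCy] := pselect (Cm y); last by exists (setT, setT).
  have xy : x <> y by move=> exy; apply: nCx; rewrite exy.
  have [U [W [oU oW Ux Wy UWK]]] := hK x y Kx (CK _ Cy) xy.
  by exists (U, W).
move=> /choice [g gP].
have oG : forall y, Cm y -> open (g y).2 by move=> y /gP [].
have cov : Cm `<=` \bigcup_(y in Cm) (g y).2.
  by move=> y Cy; exists y => //; case: (gP y Cy).
have [D' [sD' CD']] := @compact_fin_cover Cm X Cm (fun y => (g y).2) cC oG cov.
exists (\bigcap_(i in [set` D']) (g i).1), (\bigcup_(i in [set` D']) (g i).2).
split.
- by apply: open_fbigcap => i /sD' /set_mem Di; case: (gP i Di).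
- by apply: bigcup_open => i /= /sD' /set_mem Di; case: (gP i Di).
- by move=> i /= /sD' /set_mem Di; case: (gP i Di).
- exact: CD'.
apply/seteqP; split => // z [[Oz [i /= iD Wz]] Kz].
have /sD' /set_mem Di := iD.
have [_ _ _ _ E] := gP i Di.
suff : ((g i).1 `&` (g i).2 `&` K) z by rewrite E.
exact: (conj (conj (Oz i iD) Wz) Kz).
Qed.

Lemma rel_closed_compact (V Cm : set X) x : hausdorff_subset V -> compact Cm ->
  Cm `<=` V -> V x -> ~ Cm x -> exists Ob : set X, [/\ open Ob, Ob x & Ob `&` Cm = set0].
Proof.
move=> hV cC CV Vx nCx; have [Ob [W [oO oW Ox CW E]]] := sep_pt_compact hV cC CV Vx nCx.
exists Ob; split => //; apply/seteqP; split => // z [Oz Cz].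
suff : (Ob `&` W `&` V) z by rewrite E.
exact: (conj (conj Oz (CW _ Cz)) (CV _ Cz)).
Qed.

Lemma shrink1 (K Ob : set X) x : compact K -> hausdorff_subset K -> nbhs x K ->
  open Ob -> Ob x ->
  exists W Cm : set X, [/\ open W, W x, W `<=` Cm, Cm `<=` Ob & compact Cm].
Proof.
move=> cK hK nK oO Ox.
have Kx : K x by exact: nbhs_singleton.
have cC0 : compact (K `&` ~` Ob) by apply: compact_closedI => //; exact: open_closedC.
have [Pp [W' [oO' oW' Ppx C0W' E]]] :=
  sep_pt_compact hK cC0 (@subIsetl _ _ _) Kx (fun '(conj _ nO) => nO Ox).
exists (Pp `&` K° `&` Ob), (K `&` ~` W'); split.
- by apply: openI => //; apply: openI => //; exact: open_interior.
- by split => //; split.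
- move=> z [[Ppz Kz] Oz]; have Kz' : K z by exact: interior_subset.
  split => // W'z; suff : (Pp `&` W' `&` K) z by rewrite E.
  exact: (conj (conj Ppz W'z) Kz').
- move=> z [Kz nW'z]; apply: contrapT => nOz; apply: nW'z; exact: C0W'.
- by apply: compact_closedI => //; exact: open_closedC.
Qed.

End A.

Section B.
Context {R : realType} {X : topologicalType}.
Hypothesis lc : locally_compact_space (X := X).

Definition P2 (f : X -> Cx R) : Prop :=
  rel_quasi_compact [set x | f x != 0] /\
  forall (F : set_system X) (S : set X), ProperFilter F ->
      HX S -> HX_image_converges F S -> f @ F --> \sum_(s \in S) f s.

Lemma subsingleton_finite (A : set X) : (forall s t, A s -> A t -> s = t) -> finite_set A.
Proof.
move=> sA; have [[s As]|A0] := pselect (A !=set0); last first.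
  have -> : A = set0 by apply/seteqP; split => // z Az; apply: A0; exists z.
  exact: finite_set0.
have -> : A = [set s] by apply/seteqP; split => z; [move=> Az; exact: sA | move=> ->].
exact: finite_set1.
Qed.

Lemma HX_fin (S Q : set X) : HX S -> compact Q -> finite_set (S `&` Q).
Proof.
move=> HS cQ.
have /choice [K KP] := lc.
have oK : forall x, Q x -> open (K x)° by move=> x _; exact: open_interior.
have cov : Q `<=` \bigcup_(x in Q) (K x)°.
  by move=> x Qx; exists x => //; case: (KP x) => nK _ _; exact: nK.
have [D' [sD' QD']] := compact_fin_cover cQ oK cov.
apply: (@sub_finite_set _ _ (\bigcup_(i in [set` D']) (S `&` (K i)°))).
  by move=> z [Sz /QD' [i iD Kz]]; exists i.
apply: bigcup_finite; first exact: finite_fset.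
move=> i _; apply: subsingleton_finite => s t [Ss Ks] [St Kt].
case: (KP i) => _ _ hK.
apply: (HX_sub1 HS (open_interior _) (hs_sub hK (@interior_subset _ _))) => //.
Qed.

Lemma sum_restrict (h : X -> Cx R) (S Q : set X) :
  [set x | h x != 0] `<=` Q -> \sum_(s \in S) h s = \sum_(s \in S `&` Q) h s.
Proof.
move=> hQ; apply/esym/fsbig_widen; first exact: subIsetl.
move=> z [Sz nSQ] /=; apply/eqP; apply: contrapT => hz.
by apply: nSQ; split => //; apply: hQ; apply/negP.
Qed.

Lemma HX1 (x : X) : HX [set x].
Proof.
split; first by exists x.
move=> n U HU; exists x => k /= kn.
by have [_ [y [-> ?]]] := HU k kn.
Qed.

Lemma HX_open_sub (B : set (set X)) : HX_subbasic B -> HX_open (HX `&` B).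
Proof.
move=> sB; split; first exact: subIsetl.
move=> S [HS BS]; exists 1%N, (fun _ => B); split => //.
by move=> T HT /(_ 0%N isT) BT.
Qed.

Lemma P2_0 : P2 (fun _ => 0).
Proof.
split.
  by exists set0; split; [exact: compact0 | move=> x /=; rewrite eqxx].
move=> F S FF _ _; rewrite fsbig1 //; exact: cvg_cst.
Qed.

Lemma P2_add f g : P2 f -> P2 g -> P2 (fun x => f x + g x).
Proof.
move=> [[Qf [cQf sf]] Lf] [[Qg [cQg sg]] Lg]; split.
  exists (Qf `|` Qg); split; first exact: compactU.
  move=> x /= fgx; have [fx|/negP nf] := boolP (f x != 0); first by left; exact: sf.
  right; apply: sg => /=; apply: contra fgx => /eqP gx.
  by move/negP: nf; rewrite negbK => /eqP ->; rewrite gx addr0.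
move=> F S FF HS cS.
have sfQ : [set x | f x != 0] `<=` Qf `|` Qg by move=> x /sf; left.
have sgQ : [set x | g x != 0] `<=` Qf `|` Qg by move=> x /sg; right.
have sfgQ : [set x | f x + g x != 0] `<=` Qf `|` Qg.
  move=> x /= fgx; have [fx|/negP nf] := boolP (f x != 0); first exact: sfQ.
  apply: sgQ => /=; apply: contra fgx => /eqP gx.
  by move/negP: nf; rewrite negbK => /eqP ->; rewrite gx addr0.
rewrite (sum_restrict S sfgQ) fsbig_split; last by apply: HX_fin => //; exact: compactU.
rewrite -(sum_restrict S sfQ) -(sum_restrict S sgQ).
exact: (@cvgD (Cx R) (Cx R) X F _ f g _ _ (Lf F S FF HS cS) (Lg F S FF HS cS)).
Qed.

Lemma P2_scale (c : Cx R) f : P2 f -> P2 (fun x => c * f x).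
Proof.
move=> [[Qf [cQf sf]] Lf]; split.
  exists Qf; split => // x /= cfx; apply: sf => /=; apply: contra cfx => /eqP ->.
  by rewrite mulr0.
move=> F S FF HS cS.
have sfQ : [set x | f x != 0] `<=` Qf by [].
have scQ : [set x | c * f x != 0] `<=` Qf.
  move=> x /= cfx; apply: sf => /=; apply: contra cfx => /eqP ->; by rewrite mulr0.
rewrite (sum_restrict S scQ) -fsbig_distrr; last exact: HX_fin.
rewrite -(sum_restrict S sfQ).
exact: (@cvgMl_tmp (Cx R) X F _ f c _ (Lf F S FF HS cS)).
Qed.

End B.

Section C.
Context {R : realType} {X : topologicalType}.
Hypothesis lc : locally_compact_space (X := X).

Lemma P2_gen (g : X -> Cx R) : Cc_generator g -> P2 g.
Proof.
move=> [V [oV hV cg cK gV]].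
set K := closure [set x | g x != 0] `&` V.
have supK : [set x | g x != 0] `<=` K.
  move=> x /= gx; split; first exact: subset_closure.
  by apply: contrapT => nV; move: gx; rewrite gV // eqxx.
split; first by exists K.
move=> F S FF HS cS.
have [[s [Ss Vs]]|nSV] := pselect (exists s, S s /\ V s).
  have supV : [set x | g x != 0] `<=` V by move=> x /supK [].
  rewrite (sum_restrict S supV).
  have -> : S `&` V = [set s].
    apply/seteqP; split => [z [Sz Vz]|z ->] //=.
    exact: (HX_sub1 HS oV hV Sz Ss Vz Vs).
  rewrite fsbig_set1.
  have cgs : g @ nbhs s --> g s.
    by have := cg; rewrite (continuous_open_subspace _ oV) => /(_ s (mem_set Vs)).
  move=> N nN; have := cgs N nN; rewrite nbhsE => -[W [oW Ws] WN].
  pose B := [set S' : set X | S' `&` (W `&` V) !=set0].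
  have HB : HX_open (HX `&` B).
    by apply: (@HX_open_sub X B); left; exists (W `&` V); split => //; exact: openI.
  have := cS _ HB (conj HS (ex_intro _ s (conj Ss (conj Ws Vs)))).
  move=> HF; change (F (g @^-1` N)); apply: filterS HF => x [_ [y [/= -> [Wy _]]]]; exact: WN.
rewrite fsbig1; last by move=> s Ss; apply: gV => Vs; apply: nSV; exists s.
move=> N nN.
pose B := [set S' : set X | S' `&` K = set0].
have HB : HX_open (HX `&` B) by apply: (@HX_open_sub X B); right; exists K.
have SK : B S.
  apply/seteqP; split => // z [Sz [_ Vz]]; by apply: nSV; exists z.
have := cS _ HB (conj HS SK).
move=> HF; change (F (g @^-1` N)); apply: filterS HF => x [_ /= xK].
have N0 := nbhs_singleton nN.
have [gx0|gx] := eqVneq (g x) 0; first by rewrite /= gx0.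
have : ([set x] `&` K) x by split => //; exact: supK.
by rewrite xK.
Qed.

Lemma Cc_P2 (f : X -> Cx R) : Cc f -> P2 f.
Proof.
move=> [n [c [g [gg ->]]]].
have : forall m, (m <= n)%N -> P2 (fun x => \sum_(k < m) c k * g k x).
  elim=> [|m IH] mn.
    have -> : (fun x : X => \sum_(k < 0) c k * g k x) = (fun _ => 0).
      by apply: funext => x; rewrite big_ord0.
    exact: P2_0.
  have -> : (fun x : X => \sum_(k < m.+1) c k * g k x) =
      (fun x => (\sum_(k < m) c k * g k x) + c m * g m x).
    by apply: funext => x; rewrite big_ord_recr.
  apply: (P2_add lc); first exact: IH (ltnW mn).
  apply: (P2_scale lc); exact: (P2_gen (gg m mn)).
by apply.
Qed.

End C.

Section D.
Context {R : realType} {X : topologicalType}.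
Hypothesis lc : locally_compact_space (X := X).

Lemma filter_bigcap_lt (U : set_system X) (n : nat) (V : nat -> set X) : Filter U ->
  (forall k, (k < n)%N -> U (V k)) -> U (\bigcap_(k in [set k | (k < n)%N]) V k).
Proof.
move=> FU; elim: n => [|n IH] HV.
  by apply: filterS (@filterT _ U _) => z _ k /=.
have : U ((\bigcap_(k in [set k | (k < n)%N]) V k) `&` V n).
  by apply: filterI; [apply: IH => k kn; apply: HV; exact: ltnW | exact: HV].
apply: filterS => z [Hz Vz] k /= kn.
have [kn'|] := ltnP k n; first exact: Hz.
move=> nk; have kn' : (k <= n)%N by rewrite -ltnS.
by have -> : k = n by apply/eqP; rewrite eqn_leq kn' nk.
Qed.

Lemma ultra_HX (U : set_system X) (x : X) : UltraFilter U -> U --> x ->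
  HX [set s : X | U --> (s : X)] /\ HX_image_converges U [set s : X | U --> (s : X)].
Proof.
move=> UU Ux; have PU : ProperFilter U by case: UU.
split.
  split; first by exists x.
  move=> n V HV; apply: (filter_ex (F := U)); apply: filter_bigcap_lt => k kn.
  have [oV [s [Us Vs]]] := HV k kn; apply: Us; exact: open_nbhs_nbhs.
move=> Wo [_ HWo] WS; have [n [Bk [sub BS imp]]] := HWo _ WS.
have : U (\bigcap_(k in [set k | (k < n)%N]) [set y | Bk k [set y]]).
  apply: filter_bigcap_lt => k kn; have := BS k kn.
  case: (sub k kn) => [[V [oV ->]] | [Q [cQ ->]]].
    move=> [s [Us Vs]]; have UV : U V by apply: Us; exact: open_nbhs_nbhs.
    by apply: filterS UV => y Vy; exists y.
  move=> SQ; have [UQ|UnQ] := in_ultra_setVsetC Q UU.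
    have [q [Qq clq]] := cQ U PU UQ.
    move: clq; rewrite (ultra_cvg_clusterE UU) /= => Uq.
    by have : ([set s : X | U --> (s : X)] `&` Q) q by []; rewrite SQ.
  apply: filterS UnQ => y nQy; apply/seteqP; split => // z [-> Qz]; exact: nQy.
apply: filterS => y Hy; apply: imp; first exact: HX1.
by move=> k kn; exact: Hy.
Qed.

Lemma key_cvg (f : X -> Cx R) (x : X) (B : set X) : P2 f ->
  (forall U, UltraFilter U -> U B -> U --> x ->
     forall s, U --> s -> s <> x -> f s = 0) ->
  f @ within B (nbhs x) --> f x.
Proof.
move=> Pf hyp N nN; change (within B (nbhs x) (f @^-1` N)).
apply: contrapT => nW.
pose A := ~` (f @^-1` N).
pose G := filter_from (within B (nbhs x)) (fun M => M `&` A).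
have WF : Filter (within B (nbhs x)) by apply: within_filter.
have GF : Filter G.
  apply: filter_from_filter; first by exists setT; exact: filterT.
  move=> i j Wi Wj; exists (i `&` j); first exact: filterI.
  by move=> z [[iz jz] Az].
have GP : ProperFilter G.
  apply: filter_from_proper => M WM; apply: contrapT => nMA; apply: nW.
  apply: filterS WM => z Mz; apply: contrapT => nNz; apply: nMA; by exists z.
have [U [UU GU]] := ultraFilterLemma GP.
have PU : ProperFilter U by case: UU.
have UB : U B by apply: GU; exists B; [exact: withinT | exact: subIsetl].
have Ux : U --> x.
  move=> M nM; apply: GU; exists M; last exact: subIsetl.
  by apply: filterS nM => z Mz _.
have UA : U A by apply: GU; exists setT; [exact: filterT | exact: subIsetr].
have [HS cS] := ultra_HX UU Ux.
have lim := Pf.2 U _ PU HS cS.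
have Sx : [set s : X | U --> (s : X)] x by [].
rewrite -(@fsbig_widen _ _ _ _ [set x]) in lim; first last.
- move=> s [Us nsx] /=; apply: (hyp U UU UB Ux s Us) => sx; apply: nsx; by rewrite sx.
- by move=> z ->.
rewrite fsbig_set1 in lim.
have UN : U (f @^-1` N) by exact: lim.
by have [z [Nz Az]] := filter_ex (filterI UN UA).
Qed.

Lemma insep_haus (U : set_system X) (V : set X) (x s : X) : ProperFilter U ->
  U --> x -> U --> s -> open V -> hausdorff_subset V -> V x -> V s -> s = x.
Proof.
move=> PU Ux Us oV hV Vx Vs; apply: contrapT => sx.
have [Q1 [Q2 [oQ1 oQ2 Q1s Q2x E]]] := hV s x Vs Vx sx.
have U1 : U Q1 by apply: Us; exact: open_nbhs_nbhs.
have U2 : U Q2 by apply: Ux; exact: open_nbhs_nbhs.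
have UV : U V by apply: Ux; exact: open_nbhs_nbhs.
have [z Hz] := filter_ex (filterI (filterI U1 U2) UV).
by have : (Q1 `&` Q2 `&` V) z by []; rewrite E.
Qed.

End D.

Section Ec.
Context {R : realType}.
Local Notation C := (Cx R).

Lemma normC_ltE (u : C) (e : R) :
  (`|u| < e%:C)%C = (Num.sqrt (complex.Re u ^+ 2 + complex.Im u ^+ 2) < e).
Proof. by rewrite normc_def ltcR. Qed.

Lemma posC (eps : C) : 0 < eps -> eps = ((complex.Re eps)%:C)%C /\ 0 < complex.Re eps.
Proof.
rewrite ltcE => /andP [/eqP I0 R0]; split => //.
by case: eps I0 R0 => a b /= -> _.
Qed.

Lemma sqrt_geRe (a b : R) : `|a| <= Num.sqrt (a ^+ 2 + b ^+ 2).
Proof. by rewrite -sqrtr_sqr ler_wsqrtr // lerDl sqr_ge0. Qed.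

Lemma sqrt_leS (a b : R) : Num.sqrt (a ^+ 2 + b ^+ 2) <= `|a| + `|b|.
Proof.
have h : a ^+ 2 + b ^+ 2 <= (`|a| + `|b|) ^+ 2.
  rewrite sqrrD -[a ^+ 2](real_normK (num_real a)) -[b ^+ 2](real_normK (num_real b)) .
  by rewrite -addrA lerD2l lerDr mulrn_wge0 // mulr_ge0.
apply: (le_trans (ler_wsqrtr h)); rewrite sqrtr_sqr ger0_norm // addr_ge0 //.
Qed.

Lemma Re_cont : continuous (fun z : C => complex.Re z : R).
Proof.
move=> z; apply: (@cvgrPdist_lt _ _ _ (nbhs z) (nbhs_filter z) _ _).2 => e e0.
have e0' : (0 : C) < (e%:C)%C by rewrite ltcR.
have := (@cvgrPdist_lt _ _ _ (nbhs z) (nbhs_filter z) (fun w : C => w) z).1 (@cvg_id _ _) _ e0'.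
apply: filterS => w; rewrite normC_ltE => H.
apply: le_lt_trans H; rewrite -raddfB /=.
exact: sqrt_geRe.
Qed.

Lemma Im_cont : continuous (fun z : C => complex.Im z : R).
Proof.
move=> z; apply: (@cvgrPdist_lt _ _ _ (nbhs z) (nbhs_filter z) _ _).2 => e e0.
have e0' : (0 : C) < (e%:C)%C by rewrite ltcR.
have := (@cvgrPdist_lt _ _ _ (nbhs z) (nbhs_filter z) (fun w : C => w) z).1 (@cvg_id _ _) _ e0'.
apply: filterS => w; rewrite normC_ltE => H.
apply: le_lt_trans H; rewrite -raddfB /=.
rewrite [X in _ <= Num.sqrt X]addrC; exact: sqrt_geRe.
Qed.

Lemma mkC_cvg {T : Type} (F : set_system T) (g1 g2 : T -> R) (a b : R) : Filter F ->
  g1 @ F --> a -> g2 @ F --> b -> (fun t => ((g1 t) +i* (g2 t))%C : C) @ F --> ((a +i* b)%C : C).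
Proof.
move=> FF c1 c2; apply/cvgrPdist_lt => eps /posC [-> e0].
set e := complex.Re eps.
have e2 : 0 < e / 2 by rewrite divr_gt0.
have := (@cvgrPdist_lt _ _ _ F FF g1 a).1 c1 _ e2; have := (@cvgrPdist_lt _ _ _ F FF g2 b).1 c2 _ e2.
move=> h2 h1; apply: filterS (filterI h1 h2) => t [t1 t2].
rewrite normC_ltE /=; apply: le_lt_trans (sqrt_leS _ _) _.
by rewrite [e]splitr ltrD.
Qed.

End Ec.

Section E.
Context {X : topologicalType} (C1 : set X).
Hypotheses (cC1 : compact C1) (hC1 : hausdorff_subset C1).
Local Notation Y := (set_type C1).

Lemma Y_nbhs (y : Y) (M : set X) : nbhs (set_val y) M -> nbhs y (set_val @^-1` M).
Proof. by move=> nM; exact: (@initial_continuous _ _ (@set_val X C1) y M nM). Qed.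

Lemma Y_nbhs_inv (y : Y) (N : set Y) : nbhs y N ->
  exists O : set X, [/\ open O, O (set_val y) & set_val @^-1` O `<=` N].
Proof.
rewrite nbhsE => -[Ob [oO Oy] ON]; case: oO => Ob' oO' E.
by exists Ob'; split => //; [rewrite -E in Oy; exact: Oy | rewrite E].
Qed.

Lemma Y_haus : hausdorff_space Y.
Proof.
rewrite open_hausdorff => a b ab.
have ab' : set_val a <> set_val b by move=> E; move/eqP: ab; apply; apply: val_inj.
have [U [W [oU oW Ua Wb E]]] :=
  hC1 (set_valP a) (set_valP b) ab'.
exists (set_val @^-1` U, set_val @^-1` W) => /=.
  by split; apply: mem_set.
split; [by exists U | by exists W |].
apply/eqP/seteqP; split => // z [Uz Wz].
have : (U `&` W `&` C1) (set_val z) by split => //; exact: (set_valP z).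
by rewrite E.
Qed.

Lemma Y_compact : compact [set: Y].
Proof.
move=> F PF _.
have GC : (set_val @ F) C1.
  change (F (set_val @^-1` C1)); apply: filterS (@filterT _ F _) => y _; exact: set_valP.
have [x [Cx clx]] := cC1 (fmap_proper_filter set_val PF) GC.
exists (exist _ x (mem_set Cx)); split => //.
move=> A B FA nB.
have [Ob [oO Ox OB]] := Y_nbhs_inv nB.
have GA : (set_val @ F) (set_val @` A).
  change (F (set_val @^-1` (set_val @` A))); by apply: filterS FA => y Ay; exists y.
have [z [[a Aa <-] Oa]] := clx _ _ GA (open_nbhs_nbhs (conj oO Ox) : nbhs x Ob).
by exists a; split => //; exact: OB.
Qed.

Lemma Y_normal : normal_space Y.
Proof. exact: compact_normal Y_haus Y_compact. Qed.

End E.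

Section F.
Context {R : realType}.

Lemma bound_of_compact (Y : topologicalType) (AY : set Y) (p : Y -> R^o) :
  compact AY -> {within AY, continuous p} ->
  exists M : R, 0 < M /\ (forall y, AY y -> `|p y| <= M).
Proof.
move=> cA cp; have cI := continuous_compact cp cA.
have := compact_bounded cI; rewrite /bounded_near => bnd.
have [M0 [_ HM]] := bnd.
have M0M : M0 < `|M0| + 1 by apply: (le_lt_trans (ler_norm M0)); rewrite ltrDl.
exists (`|M0| + 1); split; first by rewrite ltr_pwDr // normr_ge0.
move=> y Ay; exact: (HM _ M0M (p y) (ex_intro2 _ _ y Ay erefl)).
Qed.

Lemma tietze_C (Y : topologicalType) (nY : normal_space Y) (cY : compact [set: Y])
  (AY : set Y) (psi : Y -> Cx R) : closed AY -> {within AY, continuous psi} ->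
  exists g : Y -> Cx R, continuous g /\ (forall y, AY y -> g y = psi y).
Proof.
move=> clA cpsi.
have cA : compact AY by rewrite -[AY]setTI; exact: compact_closedI.
pose pr := fun y => (complex.Re (psi y) : R^o).
pose pi := fun y => (complex.Im (psi y) : R^o).
have cr : {within AY, continuous pr}.
  move=> y; apply: continuous_comp; first exact: cpsi.
  exact: Re_cont.
have ci : {within AY, continuous pi}.
  move=> y; apply: continuous_comp; first exact: cpsi.
  exact: Im_cont.
have [Mr [Mr0 bMr]] := bound_of_compact cA cr.
have [Mi [Mi0 bMi]] := bound_of_compact cA ci.
have [gr [egr cgr _]] := continuous_bounded_extension nY clA Mr0 cr bMr.
have [gi [egi cgi _]] := continuous_bounded_extension nY clA Mi0 ci bMi.
exists (fun y => ((gr y) +i* (gi y))%C); split.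
  move=> y; apply: mkC_cvg; [exact: cgr | exact: cgi].
move=> y Ay; rewrite -(egr y (mem_set Ay)) -(egi y (mem_set Ay)) /pr /pi.
by case: (psi y).
Qed.

End F.

Section G.
Context {R : realType} {X : topologicalType}.
Hypothesis lc : locally_compact_space (X := X).
Variables (f : X -> Cx R) (V W1 W' C1 : set X).
Hypotheses (Pf : P2 f) (oV : open V) (hV : hausdorff_subset V) (oW1 : open W1)
  (oW' : open W') (cC1 : compact C1) (W1C1 : W1 `<=` C1) (C1V : C1 `<=` V)
  (supp : [set x | f x != 0] `<=` W1 `|` W').

Let A := ~` (W' `&` W1).
Let phi := fun x => if x \in W1 then f x else 0.

Lemma f0 x : ~ W1 x -> ~ W' x -> f x = 0.
Proof.
move=> n1 n2; apply/eqP; apply: contrapT => /negP fx.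
by case: (supp fx).
Qed.

Lemma keyB x : V x -> f @ within (A `&` W1) (nbhs x) --> f x.
Proof.
move=> Vx; apply: key_cvg => // U UU UB Ux s Us sx.
have PU : ProperFilter U by case: UU.
have nVs : ~ V s by move=> Vs; apply: sx; exact: (insep_haus PU Ux Us oV hV Vx Vs).
apply/eqP; apply: contrapT => /negP fs; case: (supp fs) => [W1s|W's].
  by apply: nVs; apply: C1V; apply: W1C1.
have UW' : U W' by apply: Us; exact: open_nbhs_nbhs.
have [z [[Az W1z] W'z]] := filter_ex (filterI UB UW').
by apply: Az.
Qed.

Lemma phi_cont x : V x -> A x -> phi @ within A (nbhs x) --> phi x.
Proof.
move=> Vx Ax N nN; change (nbhs x [set y | A y -> N (phi y)]).
have [W1x|nW1x] := pselect (W1 x).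
  have nW'x : ~ W' x by move=> W'x; apply: Ax.
  have phix : phi x = f x by rewrite /phi mem_set.
  rewrite phix in nN.
  have H : nbhs x [set y | (A `&` W1) y -> N (f y)] := keyB Vx nN.
  have nW1 : nbhs x W1 by exact: open_nbhs_nbhs.
  apply: filterS (filterI H nW1) => y [Hy W1y] Ay.
  by rewrite /phi mem_set //; exact: Hy.
have phix : phi x = 0 by rewrite /phi memNset.
rewrite phix in nN; have N0 := nbhs_singleton nN.
have [W'x|nW'x] := pselect (W' x).
  have nW' : nbhs x W' by exact: open_nbhs_nbhs.
  apply: filterS nW' => y W'y Ay.
  have nW1y : ~ W1 y by move=> W1y; exact: Ay.
  by rewrite /phi memNset.
have fx : f x = 0 by exact: f0.
rewrite -fx in nN.
have H : nbhs x [set y | (A `&` W1) y -> N (f y)] := keyB Vx nN.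
apply: filterS H => y Hy Ay; have [W1y|nW1y] := pselect (W1 y).
  by rewrite /phi mem_set //; exact: Hy.
by rewrite /phi memNset.
Qed.


Local Notation Y := (set_type C1).
Let AY : set Y := set_val @^-1` A.
Let psi : Y -> Cx R := fun y => phi (set_val y).

Lemma clAY : closed AY.
Proof.
apply: preimage_closed; first by move=> y _; exact: initial_continuous.
by apply: open_closedC; exact: openI.
Qed.

Lemma cpsi : {within AY, continuous psi}.
Proof.
rewrite continuous_subspace_in => y /set_mem AYy.
move=> N nN; rewrite /nbhs /= -nbhs_subspace_in //.
have Vy : V (set_val y) by apply: C1V; exact: set_valP.
have H : nbhs (set_val y) [set z | A z -> N (phi z)] := phi_cont Vy AYy nN.
have := Y_nbhs H; apply: filterS => z Hz AYz; exact: Hz.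
Qed.


Lemma step_gen : exists h : X -> Cx R, Cc_generator h /\ (forall x, ~ W' x -> h x = f x).
Proof.
have hC1 := hs_sub hV C1V.
have [g [cg eg]] := tietze_C (Y_normal cC1 hC1) (Y_compact cC1) clAY cpsi.
pose h := fun x => match pselect (C1 x) with
  | left Cx => g (exist _ x (mem_set Cx)) | right _ => 0 end.
have hC : forall x (Cx : C1 x), h x = g (exist _ x (mem_set Cx)).
  by move=> x Cx; rewrite /h; case: pselect => [Cx'|//]; congr g; exact: val_inj.
have hN : forall x, ~ C1 x -> h x = 0 by move=> x nC; rewrite /h; case: pselect.
have hA : forall x (Cx : C1 x), A x -> h x = phi x.
  by move=> x Cx Ax; rewrite (hC x Cx) eg.
have hW1 : forall x, ~ W1 x -> h x = 0.
  move=> x nW1; have [Cx|nC] := pselect (C1 x); last exact: hN.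
  by rewrite (hA x Cx) ?/phi ?memNset // => -[_].
have hsupp : [set x | h x != 0] `<=` W1.
  by move=> x /= hx; apply: contrapT => nW; move: hx; rewrite hW1 // eqxx.
exists h; split.
  exists V; split => //.
  - rewrite continuous_open_subspace // => x /set_mem Vx.
    have [Cx|nCx] := pselect (C1 x).
      pose y : Y := exist _ x (mem_set Cx).
      apply: (@cvgrPdist_lt _ _ _ (nbhs x) (nbhs_filter x) _ _).2 => e e0.
      have := (@cvgrPdist_lt _ _ _ (nbhs y) (nbhs_filter y) g (g y)).1 (cg y) e e0.
      move=> /Y_nbhs_inv [Ob [oO Oy OP]].
      have [W1x|nW1x] := pselect (W1 x).
        have nOW : nbhs x (Ob `&` W1) by apply: open_nbhs_nbhs; split => //; exact: openI.
        apply: filterS nOW => z [Oz W1z]; rewrite (hC x Cx) (hC z (W1C1 W1z)).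
        exact: (OP (exist _ z (mem_set (W1C1 W1z)))).
      have gy0 : g y = 0 by rewrite -(hC x Cx); exact: hW1.
      apply: filterS (open_nbhs_nbhs (conj oO Oy) : nbhs x Ob) => z Oz.
      have [Cz|nCz] := pselect (C1 z).
        rewrite (hC x Cx) (hC z Cz); exact: (OP (exist _ z (mem_set Cz))).
      by rewrite (hC x Cx) (hN z nCz) gy0 subrr normr0.
    have [Ob [oO Ox E]] := rel_closed_compact hV cC1 C1V Vx nCx.
    apply: (@cvgrPdist_lt _ _ _ (nbhs x) (nbhs_filter x) _ _).2 => e e0.
    apply: filterS (open_nbhs_nbhs (conj oO Ox) : nbhs x Ob) => z Oz.
    have nCz : ~ C1 z.
      by move=> Cz; have : (Ob `&` C1) z by []; rewrite E.
    by rewrite (hN x nCx) (hN z nCz) subrr normr0.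
  - have -> : closure [set x | h x != 0] `&` V = closure [set x | h x != 0] `&` C1.
      apply/seteqP; split => z [clz Vz]; split => //; last exact: C1V.
      apply: contrapT => nCz.
      have [Ob [oO Oz E]] := rel_closed_compact hV cC1 C1V Vz nCz.
      have [w [hw Ow]] := clz Ob (open_nbhs_nbhs (conj oO Oz)).
      suff : (Ob `&` C1) w by rewrite E.
      have W1w : W1 w by apply: hsupp.
      by split => //; apply: W1C1.
    by rewrite setIC; apply: compact_closedI => //; exact: closed_closure.
  - by move=> x nVx; apply: hN => Cx; apply: nVx; exact: C1V.
move=> x nW'x; have [Cx|nCx] := pselect (C1 x).
  rewrite (hA x Cx); last by move=> [W'x _].
  rewrite /phi; have [W1x|nW1x] := pselect (W1 x); first by rewrite mem_set.
  by rewrite memNset // f0.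
have nW1x : ~ W1 x by move=> W1x; apply: nCx; exact: W1C1.
by rewrite hN // f0.
Qed.

End G.

Section H.
Context {R : realType} {X : topologicalType}.
Hypothesis lc : locally_compact_space (X := X).

Lemma compact_bigsetU (I : eqType) (s : seq I) (F : I -> set X) :
  (forall i, i \in s -> compact (F i)) -> compact (\big[setU/set0]_(i <- s) F i).
Proof.
elim: s => [|a s IH] cF; first by rewrite big_nil; exact: compact0.
rewrite big_cons; apply: compactU; first by apply: cF; rewrite in_cons eqxx.
by apply: IH => i iS; apply: cF; rewrite in_cons iS orbT.
Qed.

Lemma compact_bigcup_fset (I : choiceType) (D : {fset I}) (F : I -> set X) :
  (forall i, i \in D -> compact (F i)) -> compact (\bigcup_(i in [set` D]) F i).
Proof. by move=> cF; rewrite bigcup_fset; exact: compact_bigsetU. Qed.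

Lemma compact_bigcup_lt (n : nat) (F : nat -> set X) :
  (forall i, (i < n)%N -> compact (F i)) ->
  compact (\bigcup_(i in [set i | (i < n)%N]) F i).
Proof.
elim: n => [|n IH] cF.
  have -> : \bigcup_(i in [set i | (i < 0)%N]) F i = set0.
    by apply/seteqP; split => // z [j].
  exact: compact0.
have -> : \bigcup_(i in [set i | (i < n.+1)%N]) F i =
    \bigcup_(i in [set i | (i < n)%N]) F i `|` F n.
  apply/seteqP; split => z.
    move=> [i /= ilt Fz]; have [iln|] := ltnP i n; first by left; exists i.
    move=> nli; have iln : (i <= n)%N by rewrite -ltnS.
    by right; have -> : n = i by apply/eqP; rewrite eqn_leq nli iln.
  case=> [[i /= ilt Fz]|Fz]; first by exists i => //=; exact: ltnW.
  by exists n => //=.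
by apply: compactU; [apply: IH => i ilt; apply: cF; exact: ltnW | exact: cF].
Qed.

Lemma shrink_multi (Q : set X) (n : nat) (V : nat -> set X) :
  compact Q -> (forall i, (i < n)%N -> open (V i)) ->
  Q `<=` \bigcup_(i in [set i | (i < n)%N]) V i ->
  exists W C : nat -> set X,
    (forall i, (i < n)%N -> [/\ open (W i), W i `<=` C i, C i `<=` V i & compact (C i)]) /\
    Q `<=` \bigcup_(i in [set i | (i < n)%N]) W i.
Proof.
move=> cQ oV QV.
have : forall x, exists t : nat * (set X * set X), Q x ->
   [/\ (t.1 < n)%N, open t.2.1 /\ t.2.1 x, t.2.1 `<=` t.2.2, t.2.2 `<=` V t.1
     & compact t.2.2].
  move=> x; have [Qx|nQx] := pselect (Q x); last by exists (0%N, (set0, set0)).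
  have [i /= iln Vix] := QV x Qx.
  have [K [nK cK hK]] := lc x.
  have [W [Cm [oW Wx WC CV cC]]] := shrink1 cK hK nK (oV i iln) Vix.
  by exists (i, (W, Cm)).
move=> /choice [fn fnP].
have oG : forall x, Q x -> open (fn x).2.1 by move=> x /fnP [_ []].
have cov : Q `<=` \bigcup_(x in Q) (fn x).2.1.
  by move=> x Qx; exists x => //; case: (fnP x Qx) => _ [].
have [D' [sD' QD']] := compact_fin_cover cQ oG cov.
have DQ : forall x, x \in D' -> Q x by move=> x /sD' /set_mem.
exists (fun i => \bigcup_(x in [set` D']) (if (fn x).1 == i then (fn x).2.1 else set0)).
exists (fun i => \bigcup_(x in [set` D']) (if (fn x).1 == i then (fn x).2.2 else set0)).
split.
  move=> i iln; split.
  - apply: bigcup_open => x /= xD; case: ifP => _; last exact: open0.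
    by case: (fnP x (DQ x xD)) => _ [].
  - move=> z [x /= xD]; case: ifP => // E Wz; exists x => //=.
    by rewrite E; case: (fnP x (DQ x xD)) => _ _ WC _ _; exact: WC.
  - move=> z [x /= xD]; case: ifP => // /eqP <- Cz.
    by case: (fnP x (DQ x xD)) => _ _ _ CV _; exact: CV.
  - apply: compact_bigcup_fset => x xD; case: ifP => _; last exact: compact0.
    by case: (fnP x (DQ x xD)).
move=> z Qz; have [x /= xD Wz] := QD' z Qz.
case: (fnP x (DQ x xD)) => iln _ _ _ _.
by exists (fn x).1 => //; exists x => //=; rewrite eqxx.
Qed.

End H.

Section I.
Context {R : realType} {X : topologicalType}.
Hypothesis lc : locally_compact_space (X := X).

Lemma Cc_zero : Cc (fun _ : X => 0 : Cx R).
Proof.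
exists 0%N, (fun _ => 0), (fun _ _ => 0); split => //.
by apply: funext => x; rewrite big_ord0.
Qed.

Lemma Cc_gen1 (h : X -> Cx R) : Cc_generator h -> Cc h.
Proof.
move=> gh; exists 1%N, (fun _ => 1), (fun _ => h); split => //.
by apply: funext => x; rewrite big_ord1 mul1r.
Qed.

Lemma Cc_add (a b : X -> Cx R) : Cc a -> Cc b -> Cc (fun x => a x + b x).
Proof.
move=> [n1 [c1 [g1 [gg1 ->]]]] [n2 [c2 [g2 [gg2 ->]]]].
exists (n1 + n2)%N, (fun k => if (k < n1)%N then c1 k else c2 (k - n1)%N),
  (fun k => if (k < n1)%N then g1 k else g2 (k - n1)%N); split.
  move=> k kn; case: ifP => kn1; first exact: gg1.
  apply: gg2; rewrite ltn_subLR //; rewrite leqNgt kn1 //.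
apply: funext => x; rewrite big_split_ord /=; congr (_ + _).
  by apply: eq_bigr => i _; rewrite /= ltn_ord.
apply: eq_bigr => i _; rewrite /= ltnNge leq_addr /= addKn //.
Qed.

Lemma main_ind (n : nat) : forall (f : X -> Cx R) (Q : set X) (V : nat -> set X),
  P2 f -> compact Q -> [set x | f x != 0] `<=` Q ->
  (forall i, (i < n)%N -> open (V i) /\ hausdorff_subset (V i)) ->
  Q `<=` \bigcup_(i in [set i | (i < n)%N]) V i -> Cc f.
Proof.
elim: n => [|n IH] f Q V Pf cQ sQ hV QV.
  have -> : f = (fun _ => 0).
    apply: funext => x; apply/eqP; apply: contrapT => /negP fx.
    by have [j] := QV x (sQ x fx).
  exact: Cc_zero.
have [W [C [WC QW]]] := shrink_multi lc cQ (fun i iln => (hV i iln).1) QV.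
pose W' := \bigcup_(i in [set i | (i < n)%N]) W i.+1.
pose C' := \bigcup_(i in [set i | (i < n)%N]) C i.+1.
have [oW0 W0C0 C0V0 cC0] := WC 0%N isT.
have [oV0 hV0] := hV 0%N isT.
have oW' : open W'.
  by apply: bigcup_open => i /= iln; have [] := WC i.+1 iln.
have suppf : [set x | f x != 0] `<=` W 0%N `|` W'.
  move=> x /sQ /QW [[|i] /= iln Wx]; first by left.
  by right; exists i.
have [h [gh hf]] := step_gen Pf oV0 hV0 oW0 oW' cC0 W0C0 C0V0 suppf.
pose f' := fun x => f x + (-1) * h x.
have Pf' : P2 f' := P2_add lc Pf (P2_scale lc (-1) (P2_gen gh)).
have cC' : compact C'.
  by apply: compact_bigcup_lt => i iln; have [] := WC i.+1 iln.
have sC' : [set x | f' x != 0] `<=` C'.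
  move=> x /= fx; have [W'x|nW'x] := pselect (W' x).
    by case: W'x => i /= iln Wx; exists i => //; have [_ WCi _ _] := WC i.+1 iln; exact: WCi.
  by move: fx; rewrite /f' hf // mulN1r subrr eqxx.
have C'V : C' `<=` \bigcup_(i in [set i | (i < n)%N]) V i.+1.
  by move=> x [i /= iln Cx]; exists i => //; have [_ _ CV _] := WC i.+1 iln; exact: CV.
have Cf' : Cc f' := IH f' C' (fun i => V i.+1) Pf' cC' sC' (fun i iln => hV i.+1 iln) C'V.
have -> : f = (fun x => h x + f' x).
  by apply: funext => x; rewrite /f' mulN1r addrCA subrr addr0.
by apply: Cc_add => //; exact: Cc_gen1.
Qed.

End I.

End ProofHelpers.
Import ProofHelpers.


Theorem proposition4p1 (R : realType) (X : topologicalType) (f : X -> Cx R) :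
  locally_compact_space (X := X) ->
  (Cc f <->
   (rel_quasi_compact [set x | f x != 0] /\
    forall (F : set_system X) (S : set X), ProperFilter F ->
      HX S -> HX_image_converges F S ->
      f @ F --> \sum_(s \in S) f s)).
Proof.
move=> lc; split; first exact: (Cc_P2 lc).
move=> Pf; have [Q [cQ sQ]] := Pf.1.
have [[x0 _]|Q0] := pselect (Q !=set0); last first.
  have -> : f = (fun _ => 0).
    apply: funext => x; apply/eqP; apply: contrapT => /negP fx.
    by apply: Q0; exists x; exact: sQ.
  exact: Cc_zero.
have /choice [K KP] := lc.
have oK : forall x, Q x -> open (K x)° by move=> x _; exact: open_interior.
have cov : Q `<=` \bigcup_(x in Q) (K x)°.
  by move=> x Qx; exists x => //; case: (KP x) => nK _ _; exact: nK.
have [D' [sD' QD']] := compact_fin_cover cQ oK cov.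
pose s := finmap.enum_fset D'.
pose V := fun i => (K (nth x0 s i))°.
apply: (main_ind lc (n := size s) (V := V) Pf cQ sQ).
  move=> i ilt; split; first exact: open_interior.
  by have [_ _ hK] := KP (nth x0 s i); exact: (hs_sub hK (@interior_subset _ _)).
move=> x Qx; have [y yD Ky] := QD' x Qx.
exists (index y s); first by rewrite /= index_mem.
by rewrite /V nth_index.
Qed.
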